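(* Let $0<\alpha<1$, let $x>0$ be fixed, let $y$ be a sufficiently differentiable function on $[0,x]$, and for a positive integer $n$ put $h=x/n$, $y_j=y(jh)$. Then, as $n\to\infty$, $$\frac{1}{h^\alpha}\sum_{k=0}^{n}\sigma_k^{(\alpha)}y_{n-k}=h^{2-\alpha}\sum_{k=1}^{n-1}k^{1-\alpha}\,y''\big((n-k)h\big)+(nh)^{1-\alpha}\,y'\!\left(\tfrac{h}{2}\right)+O\left(h^2\right).$$
   Context: Define $\sigma_0^{(\alpha)}=1$, $\sigma_n^{(\alpha)}=(n-1)^{1-\alpha}-n^{1-\alpha}$, and $\sigma_k^{(\alpha)}=(k-1)^{1-\alpha}-2k^{1-\alpha}+(k+1)^{1-\alpha}$ for $1\le k\le n-1$. ''Sufficiently differentiable'' means $y\in C^r[0,x]$ for some sufficiently large $r$. *)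

(* Defs.v *)
From Stdlib Require Import Reals Lra Lia.
From Coquelicot Require Import Coquelicot.
Open Scope R_scope.

(* real power t^a for t >= 0 with the convention 0^a = 0 (used with a = 1-alpha > 0);
   Stdlib's Rpower 0 a would give 1, hence this wrapper. *)
Definition rpow (t a : R) : R := if Req_EM_T t 0 then 0 else Rpower t a.

Definition sigma_a (alpha : R) (n k : nat) : R :=
  if (k =? 0)%nat then 1
  else if (k =? n)%nat then rpow (INR (n - 1)) (1 - alpha) - rpow (INR n) (1 - alpha)
  else rpow (INR (k - 1)) (1 - alpha) - 2 * rpow (INR k) (1 - alpha)
       + rpow (INR (k + 1)) (1 - alpha).

Definition C_r_on (r : nat) (a b : R) (y : R -> R) : Prop :=
  forall k : nat, (k <= r)%nat -> forall t : R, a <= t <= b ->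
    ex_derive_n y k t /\ continuous (Derive_n y k) t.

(* Main.v *)
Require Import Defs.
From Stdlib Require Import Reals Lra Lia.
From Coquelicot Require Import Coquelicot.
Open Scope R_scope.

Lemma D_est (y : R -> R) s h M4 : 0 < h ->
  (forall t, s <= t <= s + 2*h -> forall k, (k <= 4)%nat -> ex_derive_n y k t) ->
  (forall t, s <= t <= s + 2*h -> Rabs (Derive_n y 4 t) <= M4) ->
  Rabs (y (s+2*h) - 2 * y (s+h) + y s - h^2 * Derive_n y 2 (s+h)) <= 2*M4*h^4.
Proof.
  intros hp Hd HM.
  destruct (Taylor_Lagrange y 3 s (s+h)) as [z1 [Hz1 E1]]; [lra| intros t Ht k Hk; apply Hd; lra || lia |].
  destruct (Taylor_Lagrange y 3 s (s+2*h)) as [z2 [Hz2 E2]]; [lra| intros t Ht k Hk; apply Hd; lra || lia |].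
  destruct (Taylor_Lagrange (Derive_n y 2) 1 s (s+h)) as [z3 [Hz3 E3]]; [lra| |].
  { intros t Ht k Hk. destruct k as [|[|[|k]]]; [exact I| | |lia].
    - apply (Hd t ltac:(lra) 3%nat ltac:(lia)).
    - apply (Hd t ltac:(lra) 4%nat ltac:(lia)). }
  change (Derive_n (Derive_n y 2) 2 z3) with (Derive_n y 4 z3) in E3.
  assert (B1 := HM z1 ltac:(lra)). assert (B2 := HM z2 ltac:(lra)). assert (B3 := HM z3 ltac:(lra)).
  set (d1 := Derive_n y 4 z1) in *.
  set (d2 := Derive_n y 4 z2) in *.
  set (d3 := Derive_n y 4 z3) in *.
  clearbody d1 d2 d3.
  rewrite E1, E2, E3. simpl.
  match goal with |- Rabs ?e <= _ => replace e with (h^4 * (2/3*d2 - 1/12*d1 - 1/2*d3)) by (simpl; field) end.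
  rewrite Rabs_mult, Rabs_right by (apply Rle_ge; apply pow_le; lra).
  assert (Rabs (2/3*d2 - 1/12*d1 - 1/2*d3) <= 2*M4).
  { apply Rabs_le_between in B1; apply Rabs_le_between in B2; apply Rabs_le_between in B3.
    apply Rabs_le; lra. }
  assert (0 <= h^4) by (apply pow_le; lra). nra.
Qed.

Lemma F_est (y : R -> R) h M3 : 0 < h ->
  (forall t, 0 <= t <= h -> forall k, (k <= 3)%nat -> ex_derive_n y k t) ->
  (forall t, 0 <= t <= h -> Rabs (Derive_n y 3 t) <= M3) ->
  Rabs (y h - y 0 - h * Derive y (h/2)) <= M3*h^3.
Proof.
  intros hp Hd HM.
  destruct (Taylor_Lagrange y 2 0 h) as [z1 [Hz1 E1]]; [lra| intros t Ht k Hk; apply Hd; lra || lia |].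
  destruct (Taylor_Lagrange (Derive_n y 1) 1 0 (h/2)) as [z2 [Hz2 E2]]; [lra| |].
  { intros t Ht k Hk. destruct k as [|[|[|k]]]; [exact I| | |lia].
    - apply (Hd t ltac:(lra) 2%nat ltac:(lia)).
    - apply (Hd t ltac:(lra) 3%nat ltac:(lia)). }
  change (Derive_n (Derive_n y 1) 2 z2) with (Derive_n y 3 z2) in E2.
  change (Derive y (h/2)) with (Derive_n y 1 (h/2)).
  assert (B1 := HM z1 ltac:(lra)). assert (B2 := HM z2 ltac:(lra)).
  set (d1 := Derive_n y 3 z1) in *.
  set (d2 := Derive_n y 3 z2) in *.
  clearbody d1 d2.
  rewrite E1, E2. simpl.
  match goal with |- Rabs ?e <= _ => replace e with (h^3 * (1/6*d1 - 1/8*d2)) by (simpl; field) end.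
  rewrite Rabs_mult, Rabs_right by (apply Rle_ge; apply pow_le; lra).
  assert (Rabs (1/6*d1 - 1/8*d2) <= M3).
  { apply Rabs_le_between in B1; apply Rabs_le_between in B2.
    apply Rabs_le; lra. }
  assert (0 <= h^3) by (apply pow_le; lra). nra.
Qed.

Definition sg (a : nat -> R) (n k : nat) : R :=
  if (k =? 0)%nat then a 1%nat
  else if (k =? n)%nat then a (n - 1)%nat - a n
  else a (k - 1)%nat - 2 * a k + a (k + 1)%nat.

Lemma sbp (a z : nat -> R) : a 0%nat = 0 -> forall m,
  sum_n_m (fun k => sg a (S m) k * z k) 0 (S m) =
  a (S m) * (z m - z (S m)) + sum_n_m (fun k => a k * (z (k-1)%nat - 2 * z k + z (S k))) 1 m.
Proof.
  intros a0. induction m.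
  - rewrite sum_n_Sm by lia. rewrite sum_n_n. rewrite sum_n_m_zero by lia.
    unfold sg; simpl. change plus with Rplus. change zero with 0. rewrite a0. ring.
  - rewrite sum_n_Sm by lia. rewrite sum_n_Sm by lia. rewrite sum_n_Sm by lia.
    rewrite sum_n_Sm in IHm by lia.
    rewrite (sum_n_m_ext_loc (fun k => sg a (S (S m)) k * z k) (fun k => sg a (S m) k * z k)).
    2:{ intros k Hk. unfold sg.
        destruct (Nat.eqb_spec k 0); [reflexivity|].
        destruct (Nat.eqb_spec k (S (S m))); [lia|].
        destruct (Nat.eqb_spec k (S m)); [lia|]. reflexivity. }
    change plus with Rplus in *.
    assert (E : sum_n_m (fun k => sg a (S m) k * z k) 0 m =
       a (S m) * (z m - z (S m)) + sum_n_m (fun k => a k * (z (k-1)%nat - 2 * z k + z (S k))) 1 m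
       - sg a (S m) (S m) * z (S m)) by lra.
    rewrite E. unfold sg.
    replace (S m =? 0)%nat with false by reflexivity.
    replace (S m =? S (S m))%nat with false by (symmetry; apply Nat.eqb_neq; lia).
    rewrite Nat.eqb_refl.
    replace (S (S m) =? 0)%nat with false by reflexivity.
    replace (S (S m) - 1)%nat with (S m) by lia.
    replace (S m - 1)%nat with m by lia.
    replace (S m + 1)%nat with (S (S m)) by lia.
    rewrite Nat.eqb_refl. match goal with |- ?A = ?B => change (@eq R A B) end. ring.
Qed.

Lemma bnd (g : R -> R) x : 0 < x -> (forall t, 0 <= t <= x -> continuous g t) ->
  exists M, 0 <= M /\ forall t, 0 <= t <= x -> Rabs (g t) <= M.
Proof.
  intros hx Hc.
  destruct (continuity_ab_maj (fun t => Rabs (g t)) 0 x) as [c [Hc1 Hc2]]; [lra| |].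
  - intros c Hc'. apply (continuity_pt_comp g Rabs).
    + apply continuity_pt_filterlim. apply Hc; auto.
    + apply Rcontinuity_abs.
  - exists (Rabs (g c)). split; [apply Rabs_pos|]. auto.
Qed.

Lemma sum_bound (f : nat -> R) m B : (forall k, (1 <= k <= m)%nat -> Rabs (f k) <= B) ->
  Rabs (sum_n_m f 1 m) <= INR m * B.
Proof.
  induction m; intros H.
  - rewrite sum_n_m_zero by lia. simpl. change (Rabs 0 <= 0 * B). rewrite Rabs_R0; lra.
  - rewrite sum_n_Sm by lia. change plus with Rplus.
    eapply Rle_trans; [apply Rabs_triang|]. rewrite S_INR.
    assert (Rabs (sum_n_m f 1 m) <= INR m * B) by (apply IHm; intros; apply H; lia).
    assert (Rabs (f (S m)) <= B) by (apply H; lia). lra.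
Qed.

Lemma sum_lin (f g : nat -> R) c n m :
  sum_n_m f n m - c * sum_n_m g n m = sum_n_m (fun k => f k - c * g k) n m.
Proof.
  induction m.
  - destruct n.
    + rewrite !sum_n_n. ring.
    + rewrite !sum_n_m_zero by lia. change zero with 0. ring.
  - destruct (Compare_dec.le_lt_dec n (S m)).
    + rewrite !sum_n_Sm by lia. change plus with Rplus. rewrite <- IHm. ring.
    + rewrite !sum_n_m_zero by lia. change zero with 0. ring.
Qed.

Lemma rpow_pos k a : (1 <= k)%nat -> rpow (INR k) a = Rpower (INR k) a.
Proof. intros. unfold rpow. destruct (Req_EM_T (INR k) 0) as [e|]; [|reflexivity].
  apply le_INR in H. simpl in H. lra. Qed.

Theorem lemma5 :
  exists r : nat,
  forall (alpha x : R), 0 < alpha < 1 -> 0 < x ->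
  forall y : R -> R, C_r_on r 0 x y ->
  exists (C : R) (N : nat), forall n : nat, (1 <= n)%nat -> (N <= n)%nat ->
    Rabs ( / Rpower (x / INR n) alpha
             * sum_n_m (fun k => sigma_a alpha n k * y (INR (n - k) * (x / INR n))) 0 n
           - ( Rpower (x / INR n) (2 - alpha)
                 * sum_n_m (fun k => rpow (INR k) (1 - alpha)
                                     * Derive_n y 2 (INR (n - k) * (x / INR n))) 1 (n - 1)
               + Rpower (INR n * (x / INR n)) (1 - alpha) * Derive y (x / INR n / 2) ))
    <= C * (x / INR n) ^ 2.
Proof.
  exists 4%nat. intros alpha x Ha Hx y Hy.
  destruct (bnd (Derive_n y 3) x Hx) as [M3 [M3p HM3]].
  { intros t Ht. apply (Hy 3%nat ltac:(lia) t Ht). }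
  destruct (bnd (Derive_n y 4) x Hx) as [M4 [M4p HM4]].
  { intros t Ht. apply (Hy 4%nat ltac:(lia) t Ht). }
  exists (Rpower x (1-alpha) * (M3 + 2*M4*x)), 0%nat. intros n Hn _.
  destruct n as [|m]; [lia|].
  set (h := x / INR (S m)).
  assert (Hn0 : 0 < INR (S m)) by (apply lt_0_INR; lia).
  assert (hp : 0 < h) by (unfold h; apply Rdiv_lt_0_compat; lra).
  assert (nh : INR (S m) * h = x) by (unfold h; field; lra).
  set (a := fun k : nat => rpow (INR k) (1 - alpha)).
  assert (a0 : a 0%nat = 0).
  { unfold a, rpow. simpl. destruct (Req_EM_T 0 0); [reflexivity| lra]. }
  assert (a1 : a 1%nat = 1).
  { unfold a. rewrite rpow_pos by lia. simpl. unfold Rpower. rewrite ln_1, Rmult_0_r. apply exp_0. }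
  rewrite (sum_n_m_ext (fun k => sigma_a alpha (S m) k * y (INR (S m - k) * h))
             (fun k => sg a (S m) k * (fun k => y (INR (S m - k) * h)) k)).
  2:{ intros k. unfold sigma_a, sg. destruct (k =? 0)%nat; [rewrite a1; reflexivity|reflexivity]. }
  rewrite sbp by exact a0.
  replace (S m - 1)%nat with m by lia.
  replace (S m - m)%nat with 1%nat by lia. rewrite Nat.sub_diag.
  replace (INR 1 * h) with h by (simpl; ring). replace (INR 0 * h) with 0 by (simpl; ring).
  set (P := Rpower h alpha).
  assert (Pp : 0 < P) by (unfold P, Rpower; apply exp_pos).
  assert (I1 : Rpower h (2 - alpha) = h^2 / P).
  { unfold P. apply (Rmult_eq_reg_r (Rpower h alpha)); [|unfold Rpower; apply Rgt_not_eq, exp_pos].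
    rewrite <- Rpower_plus. replace (2 - alpha + alpha) with (INR 2) by (simpl; ring).
    rewrite Rpower_pow by lra. field. unfold Rpower; apply Rgt_not_eq, exp_pos. }
  assert (I2 : Rpower (INR (S m) * h) (1 - alpha) = a (S m) * h / P).
  { unfold a. rewrite rpow_pos by lia. rewrite <- Rpower_mult_distr by lra.
    unfold P. apply (Rmult_eq_reg_r (Rpower h alpha)); [|unfold Rpower; apply Rgt_not_eq, exp_pos].
    field_simplify; [|unfold Rpower; apply Rgt_not_eq, exp_pos].
    rewrite Rmult_assoc, <- Rpower_plus. replace (1 - alpha + alpha) with 1 by ring.
    rewrite Rpower_1 by lra. ring. }
  rewrite I1, I2.
  set (F := y h - y 0 - h * Derive y (h/2)).
  set (G := sum_n_m (fun k => a k * (y (INR (S m - (k - 1)) * h) - 2 * y (INR (S m - k) * h) + y (INR (S m - S k) * h))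
                                 - h^2 * (a k * Derive_n y 2 (INR (S m - k) * h))) 1 m).
  match goal with |- Rabs ?e <= _ => replace e with (a (S m) / P * F + / P * G) end.
  2:{ unfold G, F. rewrite <- sum_lin. change (fun k : nat => a k * Derive_n y 2 (INR (S m - k) * h)) with (fun k : nat => rpow (INR k) (1 - alpha) * Derive_n y 2 (INR (S m - k) * h)). match goal with |- ?A = ?B => change (@eq R A B) end. generalize (sum_n_m (G:=R_AbelianMonoid) (fun k : nat => a k * (y (INR (S m - (k - 1)) * h) - 2 * y (INR (S m - k) * h) + y (INR (S m - S k) * h))) 1 m) (sum_n_m (G:=R_AbelianMonoid) (fun k : nat => rpow (INR k) (1 - alpha) * Derive_n y 2 (INR (S m - k) * h)) 1 m). intros S1 S2. field. lra. }
  assert (an : 0 <= a (S m)).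
  { unfold a. rewrite rpow_pos by lia. unfold Rpower. left; apply exp_pos. }
  assert (ak : forall k, (1 <= k <= m)%nat -> 0 <= a k <= a (S m)).
  { intros k Hk. unfold a. rewrite !rpow_pos by lia. split.
    - unfold Rpower. left; apply exp_pos.
    - apply Rle_Rpower_l; [lra|]. split; [apply lt_0_INR; lia| apply le_INR; lia]. }
  assert (BF : Rabs F <= M3 * h^3).
  { apply F_est; auto.
    - intros t Ht k Hk. apply (Hy k ltac:(lia) t). split; [lra|].
      rewrite <- nh. assert (1 <= INR (S m)) by (apply (le_INR 1); lia). nra.
    - intros t Ht. apply HM3. split; [lra|].
      rewrite <- nh. assert (1 <= INR (S m)) by (apply (le_INR 1); lia). nra. }
  assert (BG : Rabs G <= INR m * (a (S m) * (2 * M4 * h^4))).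
  { apply sum_bound. intros k Hk.
    replace (S m - (k - 1))%nat with ((m - k) + 2)%nat by lia.
    replace (S m - k)%nat with ((m - k) + 1)%nat by lia.
    replace (S m - S k)%nat with (m - k)%nat by lia.
    rewrite !plus_INR. simpl INR.
    set (s := INR (m - k) * h).
    assert (s0 : 0 <= s) by (unfold s; apply Rmult_le_pos; [apply pos_INR| lra]).
    assert (sx : s + 2 * h <= x).
    { rewrite <- nh. unfold s. assert (INR (m - k) + 2 <= INR (S m)).
      { replace 2 with (INR 2) by (simpl; ring). rewrite <- plus_INR. apply le_INR. lia. }
      nra. }
    replace ((INR (m - k) + (1 + 1)) * h) with (s + 2 * h) by (unfold s; ring).
    replace ((INR (m - k) + 1) * h) with (s + h) by (unfold s; ring).
    replace (INR (m - k) * h) with s by reflexivity.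
    match goal with |- Rabs ?e <= _ => replace e with (a k * (y (s + 2 * h) - 2 * y (s + h) + y s - h ^ 2 * Derive_n y 2 (s + h))) by ring end.
    rewrite Rabs_mult, (Rabs_right (a k)) by (apply Rle_ge; apply ak; auto).
    assert (D := D_est y s h M4 hp).
    assert (Rabs (y (s + 2 * h) - 2 * y (s + h) + y s - h ^ 2 * Derive_n y 2 (s + h)) <= 2 * M4 * h ^ 4).
    { apply D.
      - intros t Ht k' Hk'. apply (Hy k' ltac:(lia) t). lra.
      - intros t Ht. apply HM4. lra. }
    apply Rmult_le_compat; auto; try apply ak; auto. apply Rabs_pos. }
  assert (Q : a (S m) / P = Rpower x (1 - alpha) / h).
  { rewrite <- nh, I2. field. split; lra. }
  assert (X0 : 0 <= Rpower x (1 - alpha)) by (unfold Rpower; left; apply exp_pos).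
  assert (mh : INR m * h <= x) by (rewrite <- nh; rewrite S_INR; nra).
  eapply Rle_trans; [apply Rabs_triang|].
  rewrite !Rabs_mult. rewrite (Rabs_right (a (S m) / P)) by (apply Rle_ge, Rdiv_le_0_compat; lra).
  rewrite (Rabs_right (/ P)) by (apply Rle_ge; left; apply Rinv_0_lt_compat; lra).
  assert (T1 : a (S m) / P * Rabs F <= Rpower x (1 - alpha) * M3 * h^2).
  { rewrite Q. apply Rle_trans with (Rpower x (1 - alpha) / h * (M3 * h^3)).
    - apply Rmult_le_compat_l; auto. apply Rdiv_le_0_compat; lra.
    - right. field. lra. }
  assert (T2 : / P * Rabs G <= Rpower x (1 - alpha) * (2 * M4 * x) * h^2).
  { apply Rle_trans with (/ P * (INR m * (a (S m) * (2 * M4 * h ^ 4)))).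
    - apply Rmult_le_compat_l; auto. left; apply Rinv_0_lt_compat; lra.
    - replace (/ P * (INR m * (a (S m) * (2 * M4 * h ^ 4)))) with
        ((a (S m) / P) * (INR m * h) * (2 * M4 * h^3)) by (field; lra).
      rewrite Q.
      replace (Rpower x (1 - alpha) / h * (INR m * h) * (2 * M4 * h ^ 3)) with
        (Rpower x (1 - alpha) * (2 * M4 * h ^ 2) * (INR m * h)) by (field; lra).
      replace (Rpower x (1 - alpha) * (2 * M4 * x) * h ^ 2) with
        (Rpower x (1 - alpha) * (2 * M4 * h ^ 2) * x) by ring.
      apply Rmult_le_compat_l; auto. apply Rmult_le_pos; auto.
      assert (0 <= h^2) by (apply pow_le; lra). nra. }
  lra.
Qed.
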